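(* Let $\mathcal{H}$ be an indexed preorder with existential quantification, and let $\mathcal{A}\subseteq\mathcal{H}$ be an indexed sub-preorder such that (1) every predicate in $\mathcal{A}$ is $\exists$-prime in $\mathcal{H}$, and (2) for every set $I$ and predicate $\varphi\in\mathcal{H}(I)$ there exist a function $u:J\to I$ and $\pi\in\mathcal{A}(J)$ with $\varphi\cong\exists_u\pi$. Then the inclusion $\mathcal{A}\hookrightarrow\mathcal{H}$ is an $\exists$-completion, and moreover $\mathcal{A}\hookrightarrow\mathsf{prim}(\mathcal{H})$ is an equivalence, i.e. every $\exists$-prime predicate of $\mathcal{H}$ is isomorphic to one in $\mathcal{A}$. In particular, if $\mathcal{H}$ has enough $\exists$-prime predicates, then $\mathsf{prim}(\mathcal{H})\hookrightarrow\mathcal{H}$ is an $\exists$-completion.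
   Context: An indexed preorder is a pseudofunctor $\mathcal{H}:\mathsf{Set}^{op}\to\mathsf{Ord}$; elements of $\mathcal{H}(I)$ are predicates on $I$, and $u^*=\mathcal{H}(u)$ for $u:J\to I$. $\mathsf{IOrd}$ denotes the locally ordered category of indexed preorders and pseudonatural transformations (indexed monotone maps), ordered componentwise. $\mathcal{H}$ has existential quantification if every $u^*:\mathcal{H}(I)\to\mathcal{H}(J)$ has a left adjoint $\exists_u$ and the Beck–Chevalley condition holds: for every pullback square in $\mathsf{Set}$ with $\bar u:L\to K$, $\bar v:L\to J$, $u:J\to I$, $v:K\to I$, one has $u^*\circ\exists_v\cong\exists_{\bar v}\circ\bar u^*$. An indexed monotone map $f:\mathcal{H}\to\mathcal{K}$ commutes with existential quantification if $f_I\circ\exists_u\cong\exists_u\circ f_J$ for all $u:J\to I$; $\exists\text{-}\mathsf{IOrd}$ is the sub-2-category of indexed preorders with existential quantification and such maps. An indexed monotone map $f:\mathcal{A}\to\mathcal{H}$ into an indexed preorder with existential quantification is an $\exists$-completion if for every $\mathcal{K}$ with existential quantification, precomposition $\exists\text{-}\mathsf{IOrd}(\mathcal{H},\mathcal{K})\to\mathsf{IOrd}(\mathcal{A},\mathcal{K})$ is an equivalence of preorders. For $\mathcal{H}$ with existential quantification, $\pi\in\mathcal{H}(I)$ is $\exists$-prime if for all functions $I\xleftarrow{u}J\xleftarrow{v}K$ and $\varphi\in\mathcal{H}(K)$ with $u^*\pi\le\exists_v\varphi$ there is $s:J\to K$ with $v\circ s=\mathrm{id}_J$ and $u^*\pi\le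 s^*\varphi$. $\mathsf{prim}(\mathcal{H})$ is the indexed sub-preorder of $\exists$-prime predicates, and $\mathcal{H}$ has enough $\exists$-prime predicates if every $\varphi\in\mathcal{H}(I)$ is isomorphic to $\exists_u\pi$ for some $u:J\to I$ and $\exists$-prime $\pi\in\mathcal{H}(J)$. *)

(* Defs.v *)
Set Implicit Arguments.

(** For a preorder-valued pseudofunctor all coherence conditions are automatic,
    so the data is: a preorder H(I) for each I, monotone reindexing u^*, and
    isomorphisms id^* ≅ id and (u∘v)^* ≅ v^* u^*. *)
Record IPre := {
  pr :> Type -> Type;
  le : forall I : Type, pr I -> pr I -> Prop;
  le_refl : forall I (x : pr I), le x x;
  le_trans : forall I (x y z : pr I), le x y -> le y z -> le x z;
  rx : forall (I J : Type), (J -> I) -> pr I -> pr J;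
  rx_mono : forall I J (u : J -> I) (x y : pr I), le x y -> le (rx u x) (rx u y);
  rx_id1 : forall I (x : pr I), le (rx (fun i : I => i) x) x;
  rx_id2 : forall I (x : pr I), le x (rx (fun i : I => i) x);
  rx_comp1 : forall I J K (u : J -> I) (v : K -> J) (x : pr I),
      le (rx (fun k => u (v k)) x) (rx v (rx u x));
  rx_comp2 : forall I J K (u : J -> I) (v : K -> J) (x : pr I),
      le (rx v (rx u x)) (rx (fun k => u (v k)) x)
}.

Arguments le {_ _} _ _.
Arguments rx {_ _ _} _ _.
Arguments le_refl {_ _} _.
Arguments le_trans {_ _ _ _ _} _ _.
Arguments rx_mono {_ _ _} _ {_ _} _.
Arguments rx_id1 {_ _} _.
Arguments rx_id2 {_ _} _.
Arguments rx_comp1 {_ _ _ _} _ _ _.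
Arguments rx_comp2 {_ _ _ _} _ _ _.

Definition iso (H : IPre) (I : Type) (x y : H I) : Prop := le x y /\ le y x.
Arguments iso {_ _} _ _.

Definition is_pullback (I J K L : Type) (u : J -> I) (v : K -> I)
    (ub : L -> K) (vb : L -> J) : Prop :=
  (forall l, u (vb l) = v (ub l)) /\
  (forall (X : Type) (a : X -> K) (b : X -> J),
      (forall x, v (a x) = u (b x)) ->
      exists h : X -> L, (forall x, ub (h x) = a x) /\ (forall x, vb (h x) = b x) /\
        forall h' : X -> L, (forall x, ub (h' x) = a x) -> (forall x, vb (h' x) = b x) ->
          forall x, h' x = h x).

Record HasExists (H : IPre) := {
  ex : forall (I J : Type), (J -> I) -> H J -> H I;
  ex_adj : forall I J (u : J -> I) (x : H J) (y : H I),
      le (ex u x) y <-> le x (rx u y);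
  ex_bc : forall I J K L (u : J -> I) (v : K -> I) (ub : L -> K) (vb : L -> J),
      is_pullback u v ub vb ->
      forall x : H K, iso (rx u (ex v x)) (ex vb (rx ub x))
}.

Arguments ex {_} _ {_ _} _ _.

Record IMap (H K : IPre) := {
  imap :> forall I : Type, H I -> K I;
  imap_mono : forall I (x y : H I), le x y -> le (imap I x) (imap I y);
  imap_nat : forall I J (u : J -> I) (x : H I), iso (imap J (rx u x)) (rx u (imap I x))
}.

Arguments imap {_ _} _ _ _.

Definition imap_le (H K : IPre) (f g : IMap H K) : Prop :=
  forall I (x : H I), le (f I x) (g I x).

Definition commutes_exists (H K : IPre) (hH : HasExists H) (hK : HasExists K)
    (f : IMap H K) : Prop :=
  forall I J (u : J -> I) (x : H J), iso (f I (ex hH u x)) (ex hK u (f J x)).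

Program Definition imap_comp (A H K : IPre) (g : IMap H K) (f : IMap A H) : IMap A K :=
  {| imap := fun I x => g I (f I x) |}.
Next Obligation. intros; apply imap_mono, imap_mono; assumption. Qed.
Next Obligation.
  intros.   destruct (imap_nat f u x) as [h1 h2]. destruct (imap_nat g u (f I x)) as [k1 k2].
  split.
  - eapply le_trans; [apply imap_mono; exact h1|exact k1].
  - eapply le_trans; [exact k2|apply imap_mono; exact h2].
Qed.

Definition preorder_equiv (X Y : Type) (leX : X -> X -> Prop) (leY : Y -> Y -> Prop)
    (F : X -> Y) : Prop :=
  (forall x x', leX x x' -> leY (F x) (F x')) /\
  exists G : Y -> X,
    (forall y y', leY y y' -> leX (G y) (G y')) /\
    (forall x, leX (G (F x)) x /\ leX x (G (F x))) /\
    (forall y, leY (F (G y)) y /\ leY y (F (G y))).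

Definition exists_IMap (H K : IPre) (hH : HasExists H) (hK : HasExists K) : Type :=
  { g : IMap H K | commutes_exists hH hK g }.

Definition is_exists_completion (A H : IPre) (hH : HasExists H) (f : IMap A H) : Prop :=
  forall (K : IPre) (hK : HasExists K),
    preorder_equiv
      (fun g g' : exists_IMap hH hK => imap_le (proj1_sig g) (proj1_sig g'))
      (@imap_le A K)
      (fun g : exists_IMap hH hK => imap_comp (proj1_sig g) f).

Definition reindex_closed (H : IPre) (P : forall I : Type, H I -> Prop) : Prop :=
  forall I J (u : J -> I) (x : H I), P I x -> P J (rx u x).
Arguments reindex_closed {_} _.

Definition sub_IPre (H : IPre) (P : forall I : Type, H I -> Prop)
    (hP : reindex_closed P) : IPre :=
  {| pr := fun I => { x : H I | P I x };
     le := fun I x y => le (proj1_sig x) (proj1_sig y);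
     le_refl := fun I x => le_refl (proj1_sig x);
     le_trans := fun I x y z h1 h2 => le_trans h1 h2;
     rx := fun I J u x => exist _ (rx u (proj1_sig x)) (hP _ _ u _ (proj2_sig x));
     rx_mono := fun I J u x y h => rx_mono u h;
     rx_id1 := fun I x => rx_id1 (proj1_sig x);
     rx_id2 := fun I x => rx_id2 (proj1_sig x);
     rx_comp1 := fun I J K u v x => rx_comp1 u v (proj1_sig x);
     rx_comp2 := fun I J K u v x => rx_comp2 u v (proj1_sig x) |}.

Program Definition sub_incl (H : IPre) (P : forall I : Type, H I -> Prop)
    (hP : reindex_closed P) : IMap (sub_IPre hP) H :=
  {| imap := fun I x => proj1_sig x |}.
Next Obligation. intros; assumption. Qed.
Next Obligation. intros; split; apply le_refl. Qed.

Definition ex_prime (H : IPre) (hH : HasExists H) (I : Type) (p : H I) : Prop :=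
  forall (J K : Type) (u : J -> I) (v : K -> J) (phi : H K),
    le (rx u p) (ex hH v phi) ->
    exists s : J -> K, (forall j, v (s j) = j) /\ le (rx u p) (rx s phi).

Arguments ex_prime {H} hH {I} p.

Lemma ex_prime_closed (H : IPre) (hH : HasExists H) : reindex_closed (fun I => @ex_prime H hH I).
Proof.
  intros I J w p Hp K L u v phi Hle.
  destruct (Hp K L (fun k => w (u k)) v phi) as [s [Hs Hle']].
  - eapply le_trans; [apply rx_comp1|exact Hle].
  - exists s; split; [exact Hs|].
    eapply le_trans; [apply rx_comp2|exact Hle'].
Qed.

Definition prim (H : IPre) (hH : HasExists H) : IPre := @sub_IPre H (fun I => @ex_prime H hH I) (@ex_prime_closed H hH).
Definition prim_incl (H : IPre) (hH : HasExists H) : IMap (prim hH) H :=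
  @sub_incl H (fun I => @ex_prime H hH I) (@ex_prime_closed H hH).

Definition enough_primes (H : IPre) (hH : HasExists H) : Prop :=
  forall I (phi : H I), exists (J : Type) (u : J -> I) (p : H J),
    ex_prime hH p /\ iso phi (ex hH u p).

(* Main.v *)
Require Import Defs.
From Stdlib Require Import ClassicalEpsilon FunctionalExtensionality ProofIrrelevance.
Set Implicit Arguments. Unset Strict Implicit.

Lemma ex_unit (H : IPre) (hH : HasExists H) I J (u : J -> I) (x : H J) :
  le x (rx u (ex hH u x)).
Proof. apply (ex_adj hH). apply le_refl. Qed.

Lemma ex_counit (H : IPre) (hH : HasExists H) I J (u : J -> I) (y : H I) :
  le (ex hH u (rx u y)) y.
Proof. apply (ex_adj hH). apply le_refl. Qed.

Lemma ex_mono (H : IPre) (hH : HasExists H) I J (u : J -> I) (x y : H J) :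
  le x y -> le (ex hH u x) (ex hH u y).
Proof. intro h. apply (ex_adj hH). eapply le_trans; [exact h|apply ex_unit]. Qed.

Lemma rx_ext (H : IPre) I J (f g : J -> I) (x : H I) :
  (forall j, f j = g j) -> rx f x = rx g x.
Proof. intro e. assert (f = g) by (apply functional_extensionality; exact e). now subst. Qed.

Lemma ex_comp (H : IPre) (hH : HasExists H) I J K (u : J -> I) (v : K -> J) (x : H K) :
  iso (ex hH (fun k => u (v k)) x) (ex hH u (ex hH v x)).
Proof.
  split.
  - apply (ex_adj hH). eapply le_trans; [apply (ex_unit hH v)|].
    eapply le_trans; [apply rx_mono; apply (ex_unit hH u)|]. apply rx_comp2.
  - apply (ex_adj hH). apply (ex_adj hH).
    eapply le_trans; [apply (ex_unit hH (fun k => u (v k)))|]. apply rx_comp1.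
Qed.

Lemma ex_id (H : IPre) (hH : HasExists H) I (y : H I) :
  iso (ex hH (fun i => i) y) y.
Proof.
  split.
  - apply (ex_adj hH). apply rx_id2.
  - eapply le_trans; [apply (ex_unit hH (fun i : I => i))|]. apply rx_id1.
Qed.

Definition PB (I J K : Type) (u : J -> I) (w : K -> I) : Type :=
  { p : J * K | u (fst p) = w (snd p) }.

Lemma PB_pullback (I J K : Type) (u : J -> I) (w : K -> I) :
  is_pullback u w (fun l : PB u w => snd (proj1_sig l)) (fun l : PB u w => fst (proj1_sig l)).
Proof.
  split.
  - intros [p e]. exact e.
  - intros X a b e.
    exists (fun x => exist (fun p : J * K => u (fst p) = w (snd p)) (b x, a x) (eq_sym (e x))).
    split; [reflexivity|]. split; [reflexivity|].
    intros h' e1 e2 x. destruct (h' x) as [[j k] ee] eqn:E.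
    specialize (e1 x). specialize (e2 x). rewrite E in e1, e2. simpl in e1, e2.
    subst. f_equal. apply proof_irrelevance.
Qed.

Lemma bc_PB (H : IPre) (hH : HasExists H) I J K (u : J -> I) (w : K -> I) (x : H K) :
  le (rx u (ex hH w x))
     (ex hH (fun l : PB u w => fst (proj1_sig l)) (rx (fun l : PB u w => snd (proj1_sig l)) x)).
Proof. apply (ex_bc hH (PB_pullback u w)). Qed.

Lemma L1 (H : IPre) (hH : HasExists H) (P : forall I : Type, H I -> Prop)
  (hP : reindex_closed P) (Hpr : forall I (p : H I), P I p -> ex_prime hH p)
  (K : IPre) (hK : HasExists K) (g : IMap (sub_IPre hP) K)
  I J J' (u : J -> I) (w : J' -> I) (a : sub_IPre hP J) (b : sub_IPre hP J') :
  le (ex hH u (proj1_sig a)) (ex hH w (proj1_sig b)) ->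
  le (ex hK u (g J a)) (ex hK w (g J' b)).
Proof.
  intro h.
  assert (h1 : le (rx (fun j : J => j) (proj1_sig a))
     (ex hH (fun l : PB u w => fst (proj1_sig l)) (rx (fun l : PB u w => snd (proj1_sig l)) (proj1_sig b)))).
  { eapply le_trans; [apply rx_id1|]. eapply le_trans; [apply (ex_adj hH); exact h|].
    apply bc_PB. }
  destruct (Hpr _ _ (proj2_sig a) _ _ _ _ _ h1) as [s [Hs Hle]].
  set (t := fun j => snd (proj1_sig (s j))).
  assert (ha : le a (rx t b)).
  { simpl. eapply le_trans; [apply rx_id2|]. eapply le_trans; [exact Hle|]. unfold t; exact (rx_comp2 _ _ _). }
  apply (ex_adj hK).
  eapply le_trans; [apply imap_mono; exact ha|].
  eapply le_trans; [apply (imap_nat g t b)|].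
  eapply le_trans; [apply rx_mono; apply (ex_unit hK w)|].
  eapply le_trans; [apply rx_comp2|].
  rewrite (@rx_ext _ _ _ (fun j => w (t j)) u); [apply le_refl|].
  intro j. unfold t. rewrite <- (proj2_sig (s j)). f_equal. apply Hs.
Qed.

Lemma bc_PB_iso (H : IPre) (hH : HasExists H) I J K (u : J -> I) (w : K -> I) (x : H K) :
  iso (rx u (ex hH w x))
     (ex hH (fun l : PB u w => fst (proj1_sig l)) (rx (fun l : PB u w => snd (proj1_sig l)) x)).
Proof. apply (ex_bc hH (PB_pullback u w)). Qed.

Unset Implicit Arguments.
Section Main.
Context (H : IPre) (hH : HasExists H) (P : forall I : Type, H I -> Prop)
  (hP : reindex_closed P) (Hpr : forall I (p : H I), P I p -> ex_prime hH p)
  (hrep : forall I (phi : H I), exists (J : Type) (u : J -> I) (p : H J),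
          P J p /\ iso phi (ex hH u p)).

Definition Rep (I : Type) := {J : Type & ((J -> I) * sub_IPre hP J)%type}.

Definition RepOK {I} (phi : H I) (r : Rep I) : Prop :=
  iso phi (ex hH (fst (projT2 r)) (proj1_sig (snd (projT2 r)))).

Lemma rep_exists {I} (phi : H I) : exists r : Rep I, RepOK phi r.
Proof.
  destruct (hrep I phi) as [J [u [p [Hp Hi]]]].
  exists (existT _ J (u, exist _ p Hp)). exact Hi.
Qed.

Definition rep {I} (phi : H I) : Rep I :=
  proj1_sig (constructive_indefinite_description _ (rep_exists phi)).

Lemma rep_ok {I} (phi : H I) : RepOK phi (rep phi).
Proof. unfold rep. exact (proj2_sig (constructive_indefinite_description _ (rep_exists phi))). Qed.

Context (K : IPre) (hK : HasExists K).

Definition Gmap (g : IMap (sub_IPre hP) K) {I} (phi : H I) : K I :=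
  ex hK (fst (projT2 (rep phi))) (g _ (snd (projT2 (rep phi)))).

Lemma Giso (g : IMap (sub_IPre hP) K) I (phi : H I) J (w : J -> I) (b : sub_IPre hP J) :
  iso phi (ex hH w (proj1_sig b)) -> iso (Gmap g phi) (ex hK w (g J b)).
Proof.
  intros [h1 h2]. destruct (rep_ok phi) as [r1 r2]. unfold Gmap.
  split; apply (L1 Hpr).
  - eapply le_trans; [exact r2|exact h1].
  - eapply le_trans; [exact h2|exact r1].
Qed.

Lemma G_mono (g : IMap (sub_IPre hP) K) I (x y : H I) : le x y -> le (Gmap g x) (Gmap g y).
Proof.
  intro h. destruct (rep_ok y) as [r1 r2]. destruct (rep_ok x) as [s1 s2].
  unfold Gmap at 1. apply (L1 Hpr).
  eapply le_trans; [exact s2|]. eapply le_trans; [exact h|exact r1].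
Qed.

Lemma iso_sym (L : IPre) {I} (x y : L I) : iso x y -> iso y x.
Proof. intros [a b]; split; assumption. Qed.
Lemma iso_trans (L : IPre) {I} (x y z : L I) : iso x y -> iso y z -> iso x z.
Proof. intros [a b] [c d]; split; eapply le_trans; eassumption. Qed.

Lemma G_nat (g : IMap (sub_IPre hP) K) I J (v : J -> I) (x : H I) :
  iso (Gmap g (rx v x)) (rx v (Gmap g x)).
Proof.
  destruct (rep x) as [J0 [u a]] eqn:E.
  pose proof (rep_ok x) as Hr. unfold RepOK in Hr. rewrite E in Hr. simpl in Hr.
  set (c := @rx (sub_IPre hP) _ _ (fun l : PB v u => snd (proj1_sig l)) a).
  apply iso_trans with (ex hK (fun l : PB v u => fst (proj1_sig l)) (g _ c)).
  - apply Giso. simpl.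
    apply iso_trans with (rx v (ex hH u (proj1_sig a))).
    + destruct Hr as [h1 h2]; split; apply rx_mono; assumption.
    + apply bc_PB_iso.
  - unfold Gmap. rewrite E. simpl.
    apply iso_trans with (ex hK (fun l : PB v u => fst (proj1_sig l))
        (rx (fun l : PB v u => snd (proj1_sig l)) (g _ a))).
    + destruct (imap_nat g (fun l : PB v u => snd (proj1_sig l)) a) as [k1 k2].
      split; apply ex_mono; assumption.
    + apply iso_sym, bc_PB_iso.
Qed.

Definition GI (g : IMap (sub_IPre hP) K) : IMap H K :=
  {| imap := fun I x => Gmap g x;
     imap_mono := fun I x y h => G_mono g I x y h;
     imap_nat := fun I J v x => G_nat g I J v x |}.

Lemma G_comm (g : IMap (sub_IPre hP) K) : commutes_exists hH hK (GI g).
Proof.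
  intros I J v x. simpl.
  destruct (rep x) as [J0 [u a]] eqn:E.
  pose proof (rep_ok x) as Hr. unfold RepOK in Hr. rewrite E in Hr. simpl in Hr.
  apply iso_trans with (ex hK (fun k => v (u k)) (g _ a)).
  - apply Giso. apply iso_trans with (ex hH v (ex hH u (proj1_sig a))).
    + destruct Hr as [h1 h2]; split; apply ex_mono; assumption.
    + apply iso_sym, ex_comp.
  - unfold Gmap. rewrite E. simpl. apply ex_comp.
Qed.

End Main.

Lemma part1 (H : IPre) (hH : HasExists H) (P : forall I : Type, H I -> Prop)
  (hP : reindex_closed P) (Hpr : forall I (p : H I), P I p -> ex_prime hH p)
  (hrep : forall I (phi : H I), exists (J : Type) (u : J -> I) (p : H J),
          P J p /\ iso phi (ex hH u p)) :
  is_exists_completion hH (sub_incl hP).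
Proof.
  intros K hK. split.
  - intros [g1 c1] [g2 c2] h I x. simpl in *. apply h.
  - exists (fun g => exist _ (GI H hH P hP Hpr hrep K hK g) (G_comm H hH P hP Hpr hrep K hK g)).
    split; [|split].
    + intros g g' h I x. simpl. unfold Gmap. apply ex_mono. apply h.
    + intros [f cf]. simpl.
      assert (forall I (x : H I), iso (Gmap H hH P hP hrep K hK (imap_comp f (sub_incl hP)) x) (f I x)) as HH.
      { intros I x. unfold Gmap. simpl.
        pose proof (rep_ok H hH P hP hrep x) as Hr. unfold RepOK in Hr.
        destruct (rep H hH P hP hrep x) as [J0 [u a]]. simpl in *.
        apply iso_sym. apply iso_trans with (f I (ex hH u (proj1_sig a))).
        - destruct Hr as [h1 h2]; split; apply imap_mono; assumption.
        - apply cf. }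
      split; intros I x; apply HH.
    + intros g. simpl.
      assert (forall I (a : sub_IPre hP I), iso (Gmap H hH P hP hrep K hK g (proj1_sig a)) (g I a)) as HH.
      { intros I a. apply iso_trans with (ex hK (fun i => i) (g I a)).
        - apply Giso; [exact Hpr|]. apply iso_sym, ex_id.
        - apply ex_id. }
      split; intros I x; apply HH.
Qed.

Lemma part2 (H : IPre) (hH : HasExists H) (P : forall I : Type, H I -> Prop)
  (hP : reindex_closed P)
  (hrep : forall I (phi : H I), exists (J : Type) (u : J -> I) (p : H J),
          P J p /\ iso phi (ex hH u p)) :
  forall I (p : H I), ex_prime hH p -> exists a : H I, P I a /\ iso a p.
Proof.
  intros I p Hp. destruct (hrep I p) as [J [u [q [Hq [h1 h2]]]]].
  assert (h : le (rx (fun i : I => i) p) (ex hH u q)).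
  { eapply le_trans; [apply rx_id1|exact h1]. }
  destruct (Hp _ _ _ _ _ h) as [s [Hs Hle]].
  exists (rx s q). split; [apply hP; exact Hq|]. split.
  - eapply le_trans; [apply rx_mono; apply (ex_unit hH u)|].
    eapply le_trans; [apply rx_comp2|].
    rewrite (@rx_ext _ _ _ (fun i => u (s i)) (fun i => i)); [|exact Hs].
    eapply le_trans; [apply rx_id1|exact h2].
  - eapply le_trans; [apply rx_id2|exact Hle].
Qed.

Theorem proposition4p3 :
  (forall (H : IPre) (hH : HasExists H)
          (P : forall I : Type, H I -> Prop) (hP : reindex_closed P),
      (forall I (p : H I), P I p -> ex_prime hH p) ->
      (forall I (phi : H I), exists (J : Type) (u : J -> I) (p : H J),
          P J p /\ iso phi (ex hH u p)) ->
      is_exists_completion hH (sub_incl hP) /\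
      (forall I (p : H I), ex_prime hH p -> exists a : H I, P I a /\ iso a p)) /\
  (forall (H : IPre) (hH : HasExists H),
      enough_primes hH -> is_exists_completion hH (prim_incl hH)).
Proof.
  split.
  - intros H hH P hP Hpr hrep. split.
    + exact (part1 H hH P hP Hpr hrep).
    + exact (part2 H hH P hP hrep).
  - intros H hH hen.
    exact (part1 H hH (fun I => @ex_prime H hH I) (@ex_prime_closed H hH) (fun I p h => h) hen).
Qed.
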